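(* Let $X$ be a non-empty presheaf of sets on $\mathscr{V}_f$ which is finite of degree $d$. Then (1) $|X(V)|<\infty$ for every finite-dimensional $V$; (2) $\gamma_X(t)=O(t^d)$.
   Context: $p$ prime, $\mathbb{F}=\mathbb{F}_p$, $\mathscr{V}_f$ finite-dimensional $\mathbb{F}$-vector spaces. $\mathscr{F}$ is the abelian category of functors $\mathscr{V}_f^{\mathrm{op}}\to$ ($\mathbb{F}$-vector spaces); $\mathbb{F}[X]$ is sectionwise linearization and $q_n$ is the left adjoint of the inclusion of functors of Eilenberg–MacLane polynomial degree $\le n$. A presheaf $X$ is finite if it embeds in a functor of $\mathscr{F}$ with a finite composition series; its degree is the least $n$ such that $X\to\mathbb{F}[X]\to q_n\mathbb{F}[X]$ is a monomorphism (equivalently the least polynomial degree of a finite functor into which $X$ embeds). The growth function is $\gamma_X(t)=\log_p|X(\mathbb{F}^t)|$ for $t\in\mathbb{N}$. *)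

(* Defs.v *)
From HB Require Import structures.
From mathcomp Require Import all_boot all_order all_algebra.
From Stdlib Require Rdefinitions Raxioms Rpow_def Rpower.
Set Implicit Arguments. Unset Strict Implicit. Unset Printing Implicit Defensive.
Import GRing.Theory.
Local Open Scope ring_scope.

(* The category V_f of finite-dimensional F_p-vector spaces is modelled by its
   skeleton: the object t : nat stands for F_p^t (row vectors), and a morphism
   F_p^n -> F_p^m is a matrix A : 'M['F_p]_(n,m) acting by v |-> v *m A.
   Composition "first A then B" is A *m B. *)

Record presheaf (p : nat) := Presheaf {
  ps_obj :> nat -> Type;
  ps_map : forall n m, 'M['F_p]_(n, m) -> ps_obj m -> ps_obj n;
  ps_id : forall n (x : ps_obj n), ps_map (1%:M : 'M_n) x = x;
  ps_comp : forall n m k (A : 'M['F_p]_(n, m)) (B : 'M['F_p]_(m, k)) (x : ps_obj k),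
      ps_map (A *m B) x = ps_map A (ps_map B x)
}.

Record vfunctor (p : nat) := VFunctor {
  vf_obj :> nat -> lmodType 'F_p;
  vf_map : forall n m, 'M['F_p]_(n, m) -> vf_obj m -> vf_obj n;
  vf_linear : forall n m (A : 'M['F_p]_(n, m)) (a : 'F_p) (x y : vf_obj m),
      vf_map A (a *: x + y) = a *: vf_map A x + vf_map A y;
  vf_id : forall n (x : vf_obj n), vf_map (1%:M : 'M_n) x = x;
  vf_comp : forall n m k (A : 'M['F_p]_(n, m)) (B : 'M['F_p]_(m, k)) (x : vf_obj k),
      vf_map (A *m B) x = vf_map A (vf_map B x)
}.

Definition is_subfunctor (p : nat) (F : vfunctor p) (S : forall n, F n -> Prop) :=
  [/\ forall n, S n 0,
      forall n (a : 'F_p) (x y : F n), S n x -> S n y -> S n (a *: x + y)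
    & forall n m (A : 'M['F_p]_(n, m)) (x : F m), S m x -> S n (vf_map A x)].

Definition subf_le (p : nat) (F : vfunctor p) (S T : forall n, F n -> Prop) :=
  forall n (x : F n), S n x -> T n x.

(* F has a finite composition series 0 = S_0 < S_1 < ... < S_k = F whose
   successive quotients S_{i+1}/S_i are simple, i.e. S_i is strictly contained
   in S_{i+1} and there is no subfunctor strictly in between. *)
Definition finite_functor (p : nat) (F : vfunctor p) :=
  exists (k : nat) (S : nat -> forall n, F n -> Prop),
    [/\ forall i, (i <= k)%N -> is_subfunctor (S i),
        forall n (x : F n), S 0%N n x <-> x = 0,
        forall n (x : F n), S k n x
      & forall i, (i < k)%N ->
          [/\ subf_le (S i) (S i.+1), ~ subf_le (S i.+1) (S i)
            & forall T, is_subfunctor T -> subf_le (S i) T -> subf_le T (S i.+1) ->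
                subf_le T (S i) \/ subf_le (S i.+1) T]].

(* Eilenberg--MacLane polynomial degree <= d: the (d+1)-st cross effect
   vanishes.  For V = V_1 (+) ... (+) V_(d+1) (a decomposition of F_p^N into
   coordinate blocks given by a colouring c : 'I_N -> 'I_(d+1)), and
   S a set of blocks, e_S is the projection of V onto (+)_{i in S} V_i; the
   cross effect cr_(d+1) F(V_1,...,V_(d+1)) is the image of the idempotent
   sum_S (-1)^(d+1-|S|) F(e_S) on F(V). *)
Definition block_proj (p N d : nat) (c : 'I_N -> 'I_d.+1) (S : {set 'I_d.+1})
  : 'M['F_p]_N :=
  diag_mx (\row_j (if c j \in S then 1 else 0)).

Definition poly_deg_le (p : nat) (F : vfunctor p) (d : nat) :=
  forall (N : nat) (c : 'I_N -> 'I_d.+1) (x : F N),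
    \sum_(S : {set 'I_d.+1}) ((-1) ^+ (d.+1 - #|S|) : 'F_p) *: vf_map (block_proj p c S) x = 0.

Definition embeds (p : nat) (X : presheaf p) (F : vfunctor p) :=
  exists eta : forall n, X n -> F n,
    (forall n, injective (eta n)) /\
    (forall n m (A : 'M['F_p]_(n, m)) (x : X m), eta n (ps_map A x) = vf_map A (eta m x)).

Definition finite_presheaf (p : nat) (X : presheaf p) :=
  exists F : vfunctor p, finite_functor F /\ embeds X F.

Definition presheaf_degree (p : nat) (X : presheaf p) (d : nat) :=
  (exists F : vfunctor p, [/\ finite_functor F, poly_deg_le F d & embeds X F]) /\
  (forall (n : nat) (F : vfunctor p),
      finite_functor F -> poly_deg_le F n -> embeds X F -> (d <= n)%N).

Definition nonempty_presheaf (p : nat) (X : presheaf p) := exists t, inhabited (X t).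

Definition has_card (T : Type) (n : nat) := exists f : T -> 'I_n, bijective f.

(* gamma_X(t) = log_p |X(F^t)|, given the cardinality |X(F^t)| = n. *)
Definition gamma_val (p n : nat) : Rdefinitions.R :=
  Rdefinitions.Rdiv (Rpower.ln (Raxioms.INR n)) (Rpower.ln (Raxioms.INR p)).

(* Main.v *)
Require Import Defs.
From mathcomp Require Import all_boot all_order all_algebra.
From Stdlib Require Rdefinitions Raxioms Rpow_def Rpower.
From Stdlib Require Import ClassicalEpsilon Classical.
From Stdlib Require Import Reals.

Lemma real_bound (p c N M : nat) : (1 < p)%N -> (0 < c)%N -> (c <= p ^ N)%N ->
  (N <= M)%N -> Rle (gamma_val p c) (INR M).
Proof.
move=> p1 c0 cN NM.
have lp : Rlt 0 (ln (INR p)).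
  rewrite -ln_1; apply: ln_increasing; first exact: Rlt_0_1.
  by change (Rlt (INR 1) (INR p)); apply: lt_INR; apply/leP.
have h1 : Rle (ln (INR c)) (Rmult (INR N) (ln (INR p))).
  rewrite -ln_pow; last by apply: lt_0_INR; apply/leP; apply: ltn_trans p1.
  rewrite -pow_INR.
  have le : Rle (INR c) (INR (p ^ N)) by apply: le_INR; apply/leP.
  case: (Rle_lt_or_eq _ _ le) => [lt|->]; last exact: Rle_refl.
  apply: Rlt_le; apply: ln_increasing => //.
  by apply: lt_0_INR; apply/leP.
apply Rle_trans with (INR N); last by apply: le_INR; apply/leP.
rewrite /gamma_val /Rdiv.
apply: (Rmult_le_reg_r (ln (INR p))) => //.
rewrite Rmult_assoc Rinv_l ?Rmult_1_r //.
exact: Rgt_not_eq.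
Qed.

From mathcomp Require Import all_boot all_order all_algebra.
Set Implicit Arguments. Unset Strict Implicit. Unset Printing Implicit Defensive.
Import GRing.Theory.
Local Open Scope ring_scope.

Section Span.
Variables (K : pzRingType) (V : lmodType K).

Inductive inspan (L : seq V) : V -> Prop :=
| sp0 : inspan L 0
| spL x : x \in L -> inspan L x
| spC a x y : inspan L x -> inspan L y -> inspan L (a *: x + y).

Lemma inspanD L x y : inspan L x -> inspan L y -> inspan L (x + y).
Proof. by move=> hx hy; rewrite -[x]scale1r; apply: spC. Qed.

Lemma inspanZ L a x : inspan L x -> inspan L (a *: x).
Proof. by move=> hx; rewrite -[_ *: _]addr0; apply: spC => //; apply: sp0. Qed.

Lemma inspanN L x : inspan L x -> inspan L (- x).
Proof. by move=> hx; rewrite -scaleN1r; apply: inspanZ. Qed.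

Lemma inspan_sub L L' x : {subset L <= L'} -> inspan L x -> inspan L' x.
Proof.
move=> sub; elim=> [|y /sub|a y z _ hy _ hz]; first exact: sp0.
  exact: spL.
exact: spC.
Qed.

Lemma inspan_sum (I : finType) (P : pred I) L (F : I -> V) :
  (forall i, P i -> inspan L (F i)) -> inspan L (\sum_(i | P i) F i).
Proof.
move=> h; elim/big_rec: _ => [|i x Pi hx]; first exact: sp0.
exact: inspanD (h i Pi) hx.
Qed.

Lemma inspan_coef L x : inspan L x ->
  exists c : {ffun 'I_(size L) -> K}, x = \sum_i c i *: L`_i.
Proof.
elim=> [|y yL|a y z _ [c1 ->] _ [c2 ->]].
- by exists [ffun=> 0]; rewrite big1 // => i _; rewrite ffunE scale0r.
- exists [ffun i : 'I_(size L) => if val i == index y L then 1 else 0].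
  have hi : (index y L < size L)%N by rewrite index_mem.
  rewrite (bigD1 (Ordinal hi)) //= ffunE eqxx scale1r nth_index // big1 ?addr0 //.
  move=> i /eqP neq; rewrite ffunE; case: eqP => [e|_]; last by rewrite scale0r.
  by case: neq; apply: val_inj.
- exists [ffun i => a * c1 i + c2 i].
  rewrite scaler_sumr -big_split /=; apply: eq_bigr => i _.
  by rewrite ffunE scalerDl scalerA.
Qed.
End Span.

Lemma inj_card (T : Type) (U : finType) (g : T -> U) :
  injective g -> exists n, has_card T n.
Proof.
move=> ginj.
pose A := [set u : U | if excluded_middle_informative (exists x, g x = u) then true else false].
have gA x : g x \in A.
  by rewrite inE; case: excluded_middle_informative => // [[]]; exists x.
have hA (j : 'I_#|A|) : exists x, g x = enum_val j.
  have := enum_valP j; rewrite inE; by case: excluded_middle_informative.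
exists #|A|.
exists (fun x => enum_rank_in (gA x) (g x)).
exists (fun j => proj1_sig (constructive_indefinite_description _ (hA j))).
- move=> x /=; case: constructive_indefinite_description => y /= hy.
  by apply: ginj; rewrite hy enum_rankK_in.
- move=> j /=; case: constructive_indefinite_description => y /= hy.
  apply: (can_inj (enum_valK_in (gA y))).
  by rewrite enum_rankK_in ?gA // hy.
Qed.

Lemma card_le_inj (T : Type) (U : finType) (g : T -> U) n :
  injective g -> has_card T n -> (n <= #|U|)%N.
Proof.
move=> ginj [f [h fh hf]].
have inj : injective (fun j : 'I_n => g (h j)).
  by move=> i j /ginj /(congr1 f); rewrite !hf.
by rewrite -[n]card_ord; apply: leq_card inj.
Qed.


Section Func.
Variables (p : nat) (F : vfunctor p).

Lemma vf_map0 n m (A : 'M['F_p]_(n,m)) : vf_map A (0 : F m) = 0.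
Proof.
have := vf_linear (v:=F) A (-1) 0 0.
by rewrite scaleN1r oppr0 addr0 scaleN1r addNr.
Qed.

Lemma vf_mapD n m (A : 'M['F_p]_(n,m)) (x y : F m) :
  vf_map A (x + y) = vf_map A x + vf_map A y.
Proof. by have := vf_linear (v:=F) A 1 x y; rewrite !scale1r. Qed.

Lemma vf_mapZ n m (A : 'M['F_p]_(n,m)) a (x : F m) :
  vf_map A (a *: x) = a *: vf_map A x.
Proof. by have := vf_linear (v:=F) A a x 0; rewrite !addr0 vf_map0 addr0. Qed.

Lemma inspan_map n m (A : 'M['F_p]_(n,m)) (L : seq (F m)) x :
  inspan L x -> inspan (map (vf_map A) L) (vf_map A x).
Proof.
elim=> [|y yL|a y z _ hy _ hz].
- rewrite vf_map0; exact: sp0.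
- by apply: spL; apply: map_f.
- by rewrite vf_linear; apply: spC.
Qed.

Lemma subf_span (S : forall n, F n -> Prop) n (L : seq (F n)) x :
  is_subfunctor S -> (forall y, y \in L -> S n y) -> inspan L x -> S n x.
Proof.
case=> S0 SC _ HL; elim=> [|y /HL //|a y z _ hy _ hz]; first exact: S0.
exact: SC.
Qed.

Lemma finite_span : finite_functor F ->
  forall n, exists L : seq (F n), forall x, inspan L x.
Proof.
case=> k [S [Ssub S0 Sk Sstep]].
suff H : forall i, (i <= k)%N -> forall n, exists L : seq (F n),
    forall x, S i n x -> inspan L x.
  move=> n; have [L HL] := H k (leqnn k) n; exists L => x; exact: HL (Sk n x).
elim=> [_ n|i IH lei n].
  by exists [::] => x /S0 ->; exact: sp0.
have ltik : (i < k)%N := lei.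
have [le1 nle2 maxi] := Sstep i ltik.
have Si := Ssub i (ltnW ltik).
have Si1 := Ssub i.+1 ltik.
have [m [x0 [Hx0 nHx0]]] : exists m (x0 : F m), S i.+1 m x0 /\ ~ S i m x0.
  case: (classic (exists m (x0 : F m), S i.+1 m x0 /\ ~ S i m x0)) => // hne.
  case: nle2 => m' x hx; case: (classic (S i m' x)) => // hn.
  by case: hne; exists m', x.
pose Lg q : seq (F q) := [seq vf_map A x0 | A <- enum {: 'M['F_p]_(q, m)}].
have Lgin q (A : 'M['F_p]_(q, m)) : vf_map A x0 \in Lg q.
  by apply: map_f; rewrite mem_enum.
pose T q (y : F q) := exists s z, [/\ S i q s, inspan (Lg q) z & y = s + z].
have Tsub : is_subfunctor T.
  case: Si => Si0 SiC SiM.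
  split.
  - move=> n'; exists 0, 0; split; [exact: Si0 | exact: sp0 | by rewrite addr0].
  - move=> n' a y y' [s [z [hs hz ->]]] [s' [z' [hs' hz' ->]]].
    exists (a *: s + s'), (a *: z + z'); split; first exact: SiC.
      exact: spC.
    by rewrite scalerDr addrACA.
  - move=> n' m' A y [s [z [hs hz ->]]]; exists (vf_map A s), (vf_map A z).
    split; first exact: SiM.
      apply: inspan_sub (inspan_map A hz) => w /mapP [w' /mapP [B _ ->] ->].
      by rewrite -vf_comp; apply: Lgin.
    by rewrite vf_mapD.
have le_iT : subf_le (S i) T.
  by move=> n' s hs; exists s, 0; split => //; [exact: sp0 | rewrite addr0].
have le_Ti1 : subf_le T (S i.+1).
  move=> n' y [s [z [hs hz ->]]].
  case: (Si1) => _ S1C S1M.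
  rewrite -[s]scale1r; apply: S1C; first exact: le1.
  apply: subf_span Si1 _ hz => w /mapP [B _ ->]; exact: S1M.
have x0T : T m x0.
  exists 0, x0; split; first by case: Si.
    by apply: spL; have := Lgin m 1%:M; rewrite vf_id.
  by rewrite add0r.
case: (maxi T Tsub le_iT le_Ti1) => [h|h]; first by case: nHx0; exact: h.
have [Li HLi] := IH (ltnW lei) n.
exists (Li ++ Lg n) => x /h [s [z [hs hz ->]]].
apply: inspanD.
  by apply: inspan_sub (HLi s hs) => w wL; rewrite mem_cat wL.
by apply: inspan_sub hz => w wL; rewrite mem_cat wL orbT.
Qed.
End Func.

Section Mats.
Variables (p : nat).

Definition Pi t (J : {set 'I_t}) : 'M['F_p]_t :=
  diag_mx (\row_j (if j \in J then 1 else 0)).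

Lemma PiT t : Pi [set: 'I_t] = 1%:M.
Proof.
rewrite /Pi -diag_const_mx; congr diag_mx; apply/matrixP => i j.
by rewrite !mxE in_setT.
Qed.

Lemma PiM t (K J : {set 'I_t}) : Pi K *m Pi J = Pi (K :&: J).
Proof.
rewrite /Pi mulmx_diag; congr diag_mx; apply/matrixP => i j.
rewrite !mxE inE; by case: (j \in K); case: (j \in J); rewrite ?mulr1 ?mulr0 ?mul0r.
Qed.

Lemma block_Pi N d (c : 'I_N -> 'I_d.+1) (S : {set 'I_d.+1}) :
  block_proj p c S = Pi [set j | c j \in S].
Proof.
rewrite /block_proj /Pi; congr diag_mx; apply/matrixP => i j.
by rewrite !mxE inE.
Qed.

Definition Pf t d (f : {ffun 'I_d -> option 'I_t}) : 'M['F_p]_(t, d) :=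
  \matrix_(i, k) (if f k == Some i then 1 else 0).

Definition fJ t d (J : {set 'I_t}) : {ffun 'I_d -> option 'I_t} :=
  [ffun k : 'I_d => nth None (map Some (enum J)) k].

Lemma fJ_spec t d (J : {set 'I_t}) k i :
  (fJ d J k == Some i) = (i \in J) && (val k == index i (enum J)).
Proof.
rewrite ffunE; case: (ltnP k (size (enum J))) => hk.
  rewrite (nth_map i) // inj_eq; last by move=> ? ? [].
  apply/eqP/andP => [e|[iJ /eqP ->]].
    rewrite -e index_uniq ?enum_uniq ?eqxx ?andbT // -mem_enum mem_nth //.
  by rewrite nth_index // mem_enum.
rewrite nth_default ?size_map //; symmetry; apply/andP => [[iJ /eqP ek]].
by move: hk; rewrite ek leqNgt index_mem mem_enum iJ.
Qed.

Lemma PfJ t d (J : {set 'I_t}) : (#|J| <= d)%N ->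
  Pf (fJ d J) *m (Pf (fJ d J))^T = Pi J.
Proof.
move=> hJ; apply/matrixP => i i'; rewrite !mxE.
under eq_bigr => k _ do rewrite !mxE.
case iJ: (i \in J).
  have hk : (index i (enum J) < d)%N.
    by apply: leq_trans hJ; rewrite cardE index_mem mem_enum.
  pose k0 := Ordinal hk.
  have e0 : fJ d J k0 = Some i by apply/eqP; rewrite fJ_spec iJ eqxx.
  rewrite (bigD1 k0) //= big1 ?addr0.
    rewrite e0 eqxx mul1r inj_eq; last by move=> ? ? [].
    by case: (i == i').
  move=> k nk; rewrite fJ_spec iJ /=.
  case: eqP => [ek|_]; last by rewrite mul0r.
  by case/eqP: nk; apply: val_inj.
rewrite big1 ?mul0rn // => k _; rewrite fJ_spec iJ /= mul0r //.
Qed.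
End Mats.

Section Poly.
Variables (p : nat) (F : vfunctor p) (d : nat).
Hypothesis hpoly : poly_deg_le F d.
Variable Ld : seq (F d).
Hypothesis HLd : forall x, inspan Ld x.

Definition Lt t : seq (F t) :=
  [seq vf_map (Pf p f) y | f <- enum {: {ffun 'I_d -> option 'I_t}}, y <- Ld].

Lemma span_Pi t (J : {set 'I_t}) (z : F t) : inspan (Lt t) (vf_map (Pi p J) z).
Proof.
have H : forall n (J : {set 'I_t}) (z : F t), (#|J| < n)%N ->
    inspan (Lt t) (vf_map (Pi p J) z); last exact: H (ltnSn _).
elim=> [//|n IH] {}J {}z hJ.
case: (leqP #|J| d) => hd.
  rewrite -(PfJ p hd) vf_comp.
  apply: inspan_sub (inspan_map _ (HLd _)) => w /mapP [y yL ->].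
  by apply: allpairs_f => //; rewrite mem_enum.
have [j0 _] : exists j0 : 'I_t, j0 \in J.
  by apply/set0Pn; rewrite -card_gt0; exact: leq_ltn_trans (leq0n d) hd.
pose e := enum J.
pose c (j : 'I_t) : 'I_d.+1 := inord (minn (index j e) d).
have H := hpoly c (vf_map (Pi p J) z).
rewrite (bigD1 setT) //= cardsT card_ord subnn expr0 scale1r block_Pi in H.
have ET : [set j | c j \in [set: 'I_d.+1]] = setT by apply/setP => j; rewrite !inE.
rewrite ET PiT vf_id in H.
move/eqP: H; rewrite addr_eq0 => /eqP ->.
apply/inspanN/inspan_sum => S nS; apply: inspanZ.
rewrite block_Pi -vf_comp PiM; apply: IH.
have P : [set j | c j \in S] :&: J \proper J.
  apply/properP; split; first exact: subsetIr.
  have [b nb] : exists b, b \notin S.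
    case: (pickP (fun b => b \notin S)) => [b hb|h]; first by exists b.
    case/eqP: nS; apply/setP => b; rewrite inE; have := h b; rewrite /=.
    by case: (b \in S).
  have hb : (b < size e)%N by rewrite -cardE; exact: leq_trans (ltn_ord b) hd.
  exists (nth j0 e b); first by rewrite -mem_enum mem_nth.
  rewrite !inE negb_and; apply/orP; left.
  have -> : c (nth j0 e b) = b.
    rewrite /c index_uniq ?enum_uniq // (minn_idPl _) ?inord_val //.
    by rewrite -ltnS.
  by [].
by apply: leq_trans (proper_card P) _; rewrite -ltnS.
Qed.

Lemma span_all t (x : F t) : inspan (Lt t) x.
Proof. by have := span_Pi [set: 'I_t] x; rewrite PiT vf_id. Qed.

Lemma size_Lt t : size (Lt t) = (t.+1 ^ d * size Ld)%N.
Proof. by rewrite size_allpairs -cardE card_ffun card_option !card_ord. Qed.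
End Poly.

Lemma coef_inj (p : nat) (V : lmodType 'F_p) (L : seq V) (T : Type) (g : T -> V) :
  injective g -> (forall x, inspan L x) ->
  exists h : T -> {ffun 'I_(size L) -> 'F_p}, injective h.
Proof.
move=> ginj HL.
exists (fun x => proj1_sig (constructive_indefinite_description _ (inspan_coef (HL (g x))))).
move=> x y /=.
case: (constructive_indefinite_description _ _) => cx hx.
case: (constructive_indefinite_description _ _) => cy hy /= E.
by apply: ginj; rewrite hx hy E.
Qed.

Lemma powE a b : Nat.pow a b = (a ^ b)%N.
Proof. by elim: b => // b IH; rewrite expnS -IH /= multE. Qed.

Theorem proposition6p4 (p : nat) (X : presheaf p) (d : nat) :
  prime p ->
  nonempty_presheaf X ->
  finite_presheaf X ->
  presheaf_degree X d ->
  (forall t : nat, exists n : nat, has_card (X t) n) /\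
  (forall card : nat -> nat, (forall t, has_card (X t) (card t)) ->
     exists (C : Rdefinitions.R) (t0 : nat), forall t : nat, (t0 <= t)%N ->
       Rdefinitions.Rle (gamma_val p (card t))
         (Rdefinitions.Rmult C (Rpow_def.pow (Raxioms.INR t) d))).
Proof.
move=> pr [t1 [x1]] _ [[F [Ffin Fpoly [eta [etainj etanat]]]] _].
have Fspan := finite_span Ffin.
split.
  move=> t; have [L HL] := Fspan t; have [h hinj] := coef_inj (etainj t) HL.
  exact: inj_card hinj.
move=> card hcard.
have [Ld HLd] := Fspan d.
exists (Raxioms.INR (2 ^ d * size Ld)%N), 1%N => t t1pos.
have [h hinj] := coef_inj (etainj t) (span_all Fpoly HLd (t:=t)).
have hc := card_le_inj hinj (hcard t).
rewrite card_ffun card_Fp // card_ord size_Lt in hc.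
have c1 : (0 < card t)%N.
  case: (hcard t) => f _.
  exact: (leq_ltn_trans (leq0n _) (ltn_ord (f (@ps_map p X t t1 0 x1)))).
have bound : (t.+1 ^ d * size Ld <= 2 ^ d * size Ld * t ^ d)%N.
  rewrite mulnAC -expnMn leq_mul2r; apply/orP; right.
  case: d {Fpoly h hinj Ld HLd hc} => // d'.
  by rewrite leq_exp2r // mul2n -addnn -addn1 leq_add2l.
rewrite -pow_INR -mult_INR.
rewrite (powE t d) multE.
apply: real_bound (prime_gt1 pr) c1 _ bound.
by rewrite (powE p).
Qed.
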